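(* For integers $m\ge1$ let $f_m(x)=\frac{(m-x)^{m-1}}{e^{m-x}(m-1)!}$ for $x\le m$ and $f_m(x)=0$ for $x>m$, and for integers $m\ge2$ and real $z\ge0$ let $b(m,z)$ be the unique real number with $0\le b(m,z)\le z$ and $f_m(1-z)=f_m(1+z-b(m,z))$. There is an absolute constant $C>0$ such that: (i) if $n\ge 20$ and $0\le z\le \frac n{10}$, then $b(n,z)\le \frac z3$ and $\big|b(n,z)-\frac{2z^2}{3(n-1)}\big|\le C\frac{z^3}{n^2}$; (ii) if $n\ge1$ and $|x|\le \frac n3$, then $C^{-1}n^{-1/2}e^{-x^2/n}\le f_n(x)\le C n^{-1/2}e^{-x^2/(3n)}$; (iii) if $x$ is real and $h,H$ are integers with $1\le h\le H\le 10x^2$, then $f_h(x)h^{-2}\le C f_H(x)H^{-2}$; (iv) if $k,n$ are integers with $1\le k\le n$ and $x$ is real, then $f_k(x)\le C (n/k)^{1/2} f_n(x)$.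
   Context: $f_m$ is the density of $X_1+\cdots+X_m$, where the $X_i$ are independent with density $e^{x-1}$ for $x\le 1$ and $0$ for $x>1$. *)

(* Defs.v *)
From Stdlib Require Import Arith Factorial Reals Lra ClassicalEpsilon.
Open Scope R_scope.

Definition fm (m : nat) (x : R) : R :=
  if Rle_dec x (INR m) then
    (INR m - x) ^ (m - 1) / (exp (INR m - x) * INR (fact (m - 1)))
  else 0.

Definition b_spec (m : nat) (z b : R) : Prop :=
  0 <= b <= z /\ fm m (1 - z) = fm m (1 + z - b).

(* b(m,z): the (paper: unique) real b with b_spec m z b, chosen by Hilbert's
   epsilon; it equals that unique value whenever it exists. *)
Definition b (m : nat) (z : R) : R :=
  epsilon (inhabits 0) (fun b => b_spec m z b).

(* Main.v *)
Require Import Defs.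
From Stdlib Require Import Reals.
From Stdlib Require Import Arith Factorial Reals Lra Psatz ClassicalEpsilon.
From Coquelicot Require Import Coquelicot.
Open Scope R_scope.

Lemma incr_le (f f' : R -> R) (a b : R) : a <= b ->
  (forall c, a <= c <= b -> is_derive f c (f' c)) ->
  (forall c, a < c < b -> 0 <= f' c) -> f a <= f b.
Proof.
  intros Hab Hd Hp. destruct (Req_dec a b) as [->|Hne]; [lra|].
  destruct (MVT_cor2 f f' a b) as [c [Hc1 Hc2]]; [lra| |].
  - intros c Hc. apply is_derive_Reals. now apply Hd.
  - specialize (Hp c Hc2). nra.
Qed.

Lemma ln_lb2 (u : R) : 0 <= u -> 2 * u / (2 + u) <= ln (1 + u).
Proof.
  intros Hu.
  set (h := fun w => ln (1 + w) - 2 * w / (2 + w)).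
  assert (h 0 <= h u).
  { apply (incr_le h (fun w => w^2 / ((1+w) * (2+w)^2))); [lra| |].
    - intros c Hc. unfold h. auto_derive. lra. field. lra.
    - intros c Hc. apply Rmult_le_pos. apply pow_le; lra. apply Rlt_le, Rinv_0_lt_compat. nra. }
  unfold h in H. rewrite Rplus_0_r, ln_1 in H. lra.
Qed.

Lemma ln_ub3 (u : R) : 0 <= u -> ln (1 + u) <= u - u^2/2 + u^3/3.
Proof.
  intros Hu.
  set (h := fun w => w - w^2/2 + w^3/3 - ln (1 + w)).
  assert (h 0 <= h u).
  { apply (incr_le h (fun w => w^3 / (1+w))); [lra| |].
    - intros c Hc. unfold h. auto_derive. lra. field. lra.
    - intros c Hc. apply Rmult_le_pos. apply pow_le; lra. apply Rlt_le, Rinv_0_lt_compat. nra. }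
  unfold h in H. rewrite Rplus_0_r, ln_1 in H. lra.
Qed.

Lemma ln_lb4 (u : R) : 0 <= u -> u - u^2/2 + u^3/3 - u^4/4 <= ln (1 + u).
Proof.
  intros Hu.
  set (h := fun w => ln (1 + w) - (w - w^2/2 + w^3/3 - w^4/4)).
  assert (h 0 <= h u).
  { apply (incr_le h (fun w => w^4 / (1+w))); [lra| |].
    - intros c Hc. unfold h. auto_derive. lra. field. lra.
    - intros c Hc. apply Rmult_le_pos. apply pow_le; lra. apply Rlt_le, Rinv_0_lt_compat. nra. }
  unfold h in H. rewrite Rplus_0_r, ln_1 in H. lra.
Qed.

Lemma ln_ub5 (u : R) : 0 <= u -> ln (1 + u) <= u - u^2/2 + u^3/3 - u^4/4 + u^5/5.
Proof.
  intros Hu.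
  set (h := fun w => w - w^2/2 + w^3/3 - w^4/4 + w^5/5 - ln (1 + w)).
  assert (h 0 <= h u).
  { apply (incr_le h (fun w => w^5 / (1+w))); [lra| |].
    - intros c Hc. unfold h. auto_derive. lra. field. lra.
    - intros c Hc. apply Rmult_le_pos. apply pow_le; lra. apply Rlt_le, Rinv_0_lt_compat. nra. }
  unfold h in H. rewrite Rplus_0_r, ln_1 in H. lra.
Qed.

Lemma lnm_ub4 (v : R) : 0 <= v < 1 -> ln (1 - v) <= - (v + v^2/2 + v^3/3 + v^4/4).
Proof.
  intros Hv.
  set (h := fun w => - (w + w^2/2 + w^3/3 + w^4/4) - ln (1 - w)).
  assert (h 0 <= h v).
  { apply (incr_le h (fun w => w^4 / (1-w))); [lra| |].
    - intros c Hc. unfold h. auto_derive. lra. field. lra.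
    - intros c Hc. apply Rmult_le_pos. apply pow_le; lra. apply Rlt_le, Rinv_0_lt_compat. nra. }
  unfold h in H. rewrite Rminus_0_r, ln_1 in H. lra.
Qed.

Lemma lnm_lb5 (v : R) : 0 <= v <= 1/2 -> - (v + v^2/2 + v^3/3 + v^4/4 + v^5/2) <= ln (1 - v).
Proof.
  intros Hv.
  set (h := fun w => ln (1 - w) + (w + w^2/2 + w^3/3 + w^4/4 + w^5/2)).
  assert (h 0 <= h v).
  { apply (incr_le h (fun w => w^4 * (5/2 - 1/(1-w)))); [lra| |].
    - intros c Hc. unfold h. auto_derive. lra. field. lra.
    - intros c Hc. apply Rmult_le_pos. apply pow_le; lra.
      assert (1/(1-c) <= 2). { apply Rmult_le_reg_r with (1 - c). lra. field_simplify; lra. }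
      lra. }
  unfold h in H. rewrite Rminus_0_r, ln_1 in H. lra.
Qed.

Lemma ln_le_sub1 (y : R) : 0 < y -> ln y <= y - 1.
Proof. intros Hy. pose proof (exp_ineq1_le (ln y)). rewrite exp_ln in H; lra. Qed.

Lemma ln_ge_1inv (y : R) : 0 < y -> 1 - / y <= ln y.
Proof.
  intros Hy. pose proof (ln_le_sub1 (/ y) (Rinv_0_lt_compat _ Hy)).
  rewrite ln_Rinv in H; lra.
Qed.

Lemma exp_le (x y : R) : x <= y -> exp x <= exp y.
Proof. intros H. destruct H as [H|H]; [left; now apply exp_increasing|subst; lra]. Qed.

Definition Lf (k : nat) : R := ln (INR (fact k)) + INR k - (INR k + /2) * ln (INR k).
Definition Sf (k : nat) : R := INR k ^ k * exp (- INR k) / INR (fact k).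

Lemma Lf_step k : (1 <= k)%nat -> Lf (S k) = Lf k + 1 - (INR k + /2) * ln (1 + / INR k).
Proof.
  intros Hk. assert (Hk' : 1 <= INR k) by (apply (le_INR 1); lia).
  unfold Lf. rewrite fact_simpl, mult_INR, S_INR, ln_mult.
  2: lra. 2: apply INR_fact_lt_0.
  replace (1 + / INR k) with ((INR k + 1) / INR k) by (field; lra).
  rewrite ln_div by lra. ring.
Qed.

Lemma step_bounds k : (1 <= k)%nat ->
  1 <= (INR k + /2) * ln (1 + / INR k) <= 1 + / (2 * INR k * (INR k + 1)).
Proof.
  intros Hk. assert (Hk' : 1 <= INR k) by (apply (le_INR 1); lia).
  assert (Hu : 0 <= / INR k) by (apply Rlt_le, Rinv_0_lt_compat; lra).
  split.
  - pose proof (ln_lb2 _ Hu).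
    eapply Rle_trans; [|apply Rmult_le_compat_l; [lra|exact H]].
    right. field. lra.
  - pose proof (ln_ub3 _ Hu).
    eapply Rle_trans; [apply Rmult_le_compat_l; [lra|exact H]|].
    set (k' := INR k) in *.
    apply Rle_trans with (1 + / (12 * k'^2) + / (6 * k'^3)).
    { right. field. lra. }
    assert (/ (12 * k'^2) + / (6 * k'^3) <= / (2 * k' * (k' + 1))); [|lra].
    replace (/ (12 * k'^2) + / (6 * k'^3)) with ((k' + 2) / (12 * k'^3)) by (field; lra).
    rewrite <- (Rmult_1_l (/ (2 * k' * (k' + 1)))).
    apply Rmult_le_reg_r with (12 * k'^3 * (2 * k' * (k' + 1))). 
    { apply Rmult_lt_0_compat; [|nra]. apply Rmult_lt_0_compat; [lra|]. apply pow_lt; lra. }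
    field_simplify; try lra. nra.
Qed.

Lemma Lf_bounds k : (1 <= k)%nat -> /2 + / (2 * INR k) <= Lf k <= 1.
Proof.
  intros Hk. induction k as [|k IH]; [lia|].
  destruct (Nat.eq_dec k 0) as [->|Hk0].
  - unfold Lf. simpl. rewrite ln_1. lra.
  - assert (Hk1 : (1 <= k)%nat) by lia. specialize (IH Hk1).
    assert (Hk' : 1 <= INR k) by (apply (le_INR 1); lia).
    rewrite Lf_step by lia. pose proof (step_bounds k Hk1).
    rewrite S_INR.
    assert (/ (2 * INR k) - / (2 * INR k * (INR k + 1)) = / (2 * (INR k + 1))) by (field; lra).
    lra.
Qed.

Lemma Sf_eq k : (1 <= k)%nat -> Sf k = exp (- Lf k) / sqrt (INR k).
Proof.
  intros Hk. assert (Hk' : 1 <= INR k) by (apply (le_INR 1); lia).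
  unfold Sf, Lf.
  rewrite <- (exp_ln (INR k ^ k)) by (apply pow_lt; lra).
  rewrite ln_pow by lra.
  rewrite <- Rpower_sqrt by lra. unfold Rpower.
  assert (Hf : / INR (fact k) = exp (- ln (INR (fact k)))).
  { rewrite exp_Ropp, exp_ln by apply INR_fact_lt_0. reflexivity. }
  unfold Rdiv. rewrite Hf, <- !exp_Ropp, <- !exp_plus. f_equal. ring.
Qed.

Lemma Sf_bounds k : (1 <= k)%nat -> / (3 * sqrt (INR k)) <= Sf k <= / sqrt (INR k).
Proof.
  intros Hk. assert (Hk' : 1 <= INR k) by (apply (le_INR 1); lia).
  pose proof (Lf_bounds k Hk). rewrite Sf_eq by auto.
  assert (Hs : 0 < sqrt (INR k)) by (apply sqrt_lt_R0; lra).
  assert (Hinvk : 0 < / (2 * INR k)) by (apply Rinv_0_lt_compat; lra).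
  split.
  - assert (exp (- (1)) <= exp (- Lf k)) by (apply exp_le; lra).
    assert (/3 <= exp (- (1))). { rewrite exp_Ropp. apply Rinv_le_contravar. apply exp_pos. apply exp_le_3. }
    rewrite Rinv_mult. unfold Rdiv. apply Rmult_le_compat_r. apply Rlt_le, Rinv_0_lt_compat; lra. lra.
  - assert (exp (- Lf k) <= exp 0) by (apply exp_le; lra). rewrite exp_0 in H0.
    unfold Rdiv. rewrite <- (Rmult_1_l (/ sqrt _)) at 2. apply Rmult_le_compat_r.
    apply Rlt_le, Rinv_0_lt_compat; lra. lra.
Qed.

Definition Qf (A B t : R) : R :=
  (B - A) * (Rabs (t - A))^2 / (2 * ((A + Rabs (t - A)) * (B + Rabs (t - A)))).

Lemma G_bound (A B t : R) : 0 < A -> A <= B -> 0 < t ->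
  B * ln (A + (B - A)) - A * ln A + Qf A B t <= B * ln (t + (B - A)) - A * ln t.
Proof.
  intros HA HAB Ht. set (D := B - A). set (y := Rabs (t - A)).
  set (M := (A + y) * (B + y)).
  assert (Hy : 0 <= y) by apply Rabs_pos.
  assert (HM : 0 < M) by (unfold M; nra).
  assert (HQ : Qf A B t = D * (t - A)^2 / (2 * M)).
  { unfold Qf, M, y, D. f_equal. rewrite <- Rsqr_pow2, <- Rsqr_abs, Rsqr_pow2. reflexivity. }
  rewrite HQ.
  set (K := fun s => B * ln (s + D) - A * ln s - D * (s - A)^2 / (2 * M)).
  destruct (Rle_lt_dec A t) as [Hat|Hta].
  - assert (Hyv : y = t - A) by (unfold y; rewrite Rabs_right; lra).
    assert (K A <= K t).
    { apply (incr_le K (fun s => D * (s - A) * (M - s * (s + D)) / (s * (s + D) * M))); [lra| |].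
      - intros c Hc. unfold K. auto_derive. unfold D; nra. unfold D. field. unfold D; repeat split; nra.
      - intros c Hc. apply Rmult_le_pos.
        + apply Rmult_le_pos. unfold D; nra.
          unfold M. rewrite Hyv. unfold D. nra.
        + apply Rlt_le, Rinv_0_lt_compat. unfold D in *. apply Rmult_lt_0_compat; nra. }
    unfold K in H. replace (A - A) with 0 in H by ring. unfold D in *. 
    replace (0 ^ 2) with 0 in H by ring. lra.
  - assert (Hyv : y = A - t) by (unfold y; rewrite Rabs_left; lra).
    assert (- K t <= - K A).
    { apply (incr_le (fun s => - K s) (fun s => D * (A - s) * (M - s * (s + D)) / (s * (s + D) * M))); [lra| |].
      - intros c Hc. unfold K. auto_derive. unfold D; nra. unfold D. field. unfold D; repeat split; nra.
      - intros c Hc. apply Rmult_le_pos.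
        + apply Rmult_le_pos. unfold D; nra.
          unfold M. rewrite Hyv. unfold D. nra.
        + apply Rlt_le, Rinv_0_lt_compat. unfold D in *. apply Rmult_lt_0_compat; nra. }
    unfold K in H. replace (A - A) with 0 in H by ring. unfold D in *.
    replace (0 ^ 2) with 0 in H by ring. lra.
Qed.

Lemma pow_exp (x : R) (n : nat) : 0 < x -> x ^ n = exp (INR n * ln x).
Proof. intros Hx. rewrite <- ln_pow by auto. rewrite exp_ln; auto. apply pow_lt; auto. Qed.


Lemma key (a b : nat) (t : R) : (a <= b)%nat -> (1 <= b)%nat -> 0 <= t ->
  t ^ a / (t + (INR b - INR a)) ^ b <= INR a ^ a / INR b ^ b * exp (- Qf (INR a) (INR b) t).
Proof.
  intros Hab Hb Ht.
  assert (HB : 1 <= INR b) by (apply (le_INR 1); lia).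
  assert (HAB : INR a <= INR b) by (apply le_INR; lia).
  assert (HA0 : 0 <= INR a) by apply pos_INR.
  destruct (Nat.eq_dec a 0) as [->|Ha0].
  - simpl INR. rewrite !Rminus_0_r.
    destruct (Req_dec t 0) as [->|Htn].
    + unfold Qf. replace (Rabs (0 - 0)) with 0 by (rewrite Rminus_0_r; symmetry; apply Rabs_R0).
      match goal with |- context [exp (- ?e)] => replace e with 0 by (unfold Rdiv; ring) end.
      rewrite Ropp_0, exp_0, Rplus_0_l. lra.
    + assert (Htp : 0 < t) by lra.
      unfold Qf. rewrite !Rminus_0_r, Rabs_right by lra. rewrite Rplus_0_l.
      replace (INR b * t ^ 2 / (2 * (t * (INR b + t)))) with (INR b * t / (2 * (INR b + t)))
        by (field; lra).
      rewrite !pow_O.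
      rewrite (pow_exp (t + INR b)) by lra. rewrite (pow_exp (INR b)) by lra.
      unfold Rdiv. rewrite !Rmult_1_l, <- !exp_Ropp, <- exp_plus. apply exp_le.
      assert (ln (t + INR b) - ln (INR b) >= t / (t + INR b)).
      { rewrite <- ln_div by lra. pose proof (ln_ge_1inv ((t + INR b) / INR b)).
        assert (1 - / ((t + INR b) / INR b) = t / (t + INR b)) by (field; lra).
        enough (0 < (t + INR b) / INR b) by lra. apply Rdiv_lt_0_compat; lra. }
      assert (INR b * (ln (t + INR b) - ln (INR b)) >= INR b * (t / (t + INR b))) by
        (apply Rle_ge, Rmult_le_compat_l; lra).
      assert (INR b * (t / (t + INR b)) >= INR b * t / (2 * (INR b + t))).
      { unfold Rdiv. rewrite Rinv_mult. rewrite (Rplus_comm (INR b) t).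
        assert (0 < INR b * t * / (t + INR b)).
        { apply Rmult_lt_0_compat. nra. apply Rinv_0_lt_compat; lra. }
        nra. }
      lra.
  - assert (HA : 0 < INR a) by (apply lt_0_INR; lia).
    destruct (Req_dec t 0) as [->|Htn].
    + rewrite pow_i by lia. unfold Rdiv at 1. rewrite Rmult_0_l.
      apply Rmult_le_pos; [|apply Rlt_le, exp_pos].
      apply Rmult_le_pos; [apply pow_le; lra|]. apply Rlt_le, Rinv_0_lt_compat, pow_lt; lra.
    + assert (Htp : 0 < t) by lra.
      pose proof (G_bound (INR a) (INR b) t HA HAB Htp).
      replace (INR a + (INR b - INR a)) with (INR b) in H by ring.
      rewrite (pow_exp t), (pow_exp (t + _)), (pow_exp (INR a)), (pow_exp (INR b)) by lra.
      unfold Rdiv. rewrite <- !exp_Ropp, <- !exp_plus. apply exp_le. lra.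
Qed.

Lemma fm_S (a : nat) (x : R) : x <= INR (S a) ->
  fm (S a) x = (INR (S a) - x) ^ a * exp (- (INR (S a) - x)) / INR (fact a).
Proof.
  intros Hx. unfold fm. destruct (Rle_dec x (INR (S a))); [|lra].
  replace (S a - 1)%nat with a by lia. rewrite exp_Ropp. field.
  split; [apply Rgt_not_eq, exp_pos|apply INR_fact_neq_0].
Qed.

Lemma fm_gt (m : nat) (x : R) : INR m < x -> fm m x = 0.
Proof. intros Hx. unfold fm. destruct (Rle_dec x (INR m)); [lra|auto]. Qed.

Lemma fm_nonneg (m : nat) (x : R) : 0 <= fm m x.
Proof.
  unfold fm. destruct (Rle_dec x (INR m)); [|lra].
  apply Rmult_le_pos. apply pow_le; lra.
  apply Rlt_le, Rinv_0_lt_compat, Rmult_lt_0_compat. apply exp_pos. apply INR_fact_lt_0.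
Qed.

Lemma Sf_pos k : 0 < Sf k.
Proof.
  unfold Sf. destruct k as [|k]. simpl. rewrite Ropp_0, exp_0. lra.
  apply Rmult_lt_0_compat. apply Rmult_lt_0_compat. apply pow_lt, lt_0_INR; lia. apply exp_pos.
  apply Rinv_0_lt_compat, INR_fact_lt_0.
Qed.

Lemma ratio (a d : nat) (x : R) : (1 <= d)%nat -> x <= INR (S a) ->
  fm (S a) x <= Sf a / Sf (a + d) * exp (- Qf (INR a) (INR (a + d)) (INR (S a) - x)) * fm (S (a + d)) x.
Proof.
  intros Hd Hx.
  assert (Hd' : 1 <= INR d) by (apply (le_INR 1); lia).
  assert (Hx2 : x <= INR (S (a + d))) by (rewrite S_INR in *; rewrite plus_INR; lra).
  rewrite (fm_S a) by auto. rewrite (fm_S (a + d)) by auto.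
  set (t := INR (S a) - x).
  assert (Ht : 0 <= t) by (unfold t; lra).
  assert (HT : INR (S (a + d)) - x = t + INR d) by (unfold t; rewrite !S_INR, plus_INR; ring).
  rewrite HT.
  pose proof (key a (a + d) t ltac:(lia) ltac:(lia) Ht) as K.
  replace (INR (a + d) - INR a) with (INR d) in K by (rewrite plus_INR; ring).
  set (E := exp (- Qf (INR a) (INR (a + d)) t)) in *.
  assert (HTp : 0 < (t + INR d) ^ (a + d)) by (apply pow_lt; lra).
  assert (K2 : t ^ a <= INR a ^ a / INR (a + d) ^ (a + d) * E * (t + INR d) ^ (a + d)).
  { apply Rmult_le_reg_r with (/ (t + INR d) ^ (a + d)). apply Rinv_0_lt_compat; auto.
    rewrite Rmult_assoc, Rinv_r by lra. rewrite Rmult_1_r. exact K. }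
  assert (HSa : 0 < INR (a + d)) by (rewrite plus_INR; pose proof (pos_INR a); lra).
  unfold Sf.
  replace (exp (- INR (a + d))) with (exp (- INR a) * exp (- INR d))
    by (rewrite <- exp_plus, plus_INR; f_equal; ring).
  replace (exp (- (t + INR d))) with (exp (- t) * exp (- INR d))
    by (rewrite <- exp_plus; f_equal; ring).
  assert (0 < exp (- t)) by apply exp_pos.
  assert (0 < exp (- INR a)) by apply exp_pos.
  assert (0 < exp (- INR d)) by apply exp_pos.
  assert (0 < INR (fact a)) by apply INR_fact_lt_0.
  assert (0 < INR (fact (a + d))) by apply INR_fact_lt_0.
  assert (0 < INR (a + d) ^ (a + d)) by (apply pow_lt; lra).
  apply Rle_trans with (INR a ^ a / INR (a + d) ^ (a + d) * E * (t + INR d) ^ (a + d) * exp (- t) / INR (fact a)).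
  { unfold Rdiv. apply Rmult_le_compat_r. apply Rlt_le, Rinv_0_lt_compat; auto.
    apply Rmult_le_compat_r; lra. }
  right. field. repeat split; lra.
Qed.

Lemma Sf_sq k : (1 <= k)%nat -> / (9 * INR k) <= Sf k ^ 2 <= / INR k.
Proof.
  intros Hk. assert (Hk' : 1 <= INR k) by (apply (le_INR 1); lia).
  pose proof (Sf_bounds k Hk). pose proof (sqrt_lt_R0 (INR k) ltac:(lra)).
  assert (Hs : sqrt (INR k) * sqrt (INR k) = INR k) by (apply sqrt_sqrt; lra).
  assert (0 < / (3 * sqrt (INR k))) by (apply Rinv_0_lt_compat; lra).
  remember (sqrt (INR k)) as s eqn:Es. clear Es.
  split.
  - replace (/ (9 * INR k)) with ((/ (3 * s)) ^ 2) by (rewrite <- Hs; field; lra).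
    apply pow_incr; lra.
  - replace (/ INR k) with ((/ s) ^ 2) by (rewrite <- Hs; field; lra).
    apply pow_incr. pose proof (Sf_pos k). lra.
Qed.

Lemma Sf0 : Sf 0 = 1.
Proof. unfold Sf. simpl. rewrite Ropp_0, exp_0. lra. Qed.

Lemma Sf_ratio (a b : nat) : (a <= b)%nat ->
  Sf a / Sf b <= 5 * sqrt (INR (S b) / INR (S a)).
Proof.
  intros Hab.
  assert (HA : 0 <= INR a) by apply pos_INR.
  assert (HAB : INR a <= INR b) by (apply le_INR; lia).
  pose proof (Sf_pos a). pose proof (Sf_pos b).
  assert (Hr : 0 <= Sf a / Sf b) by (apply Rlt_le, Rdiv_lt_0_compat; lra).
  rewrite <- (sqrt_pow2 (Sf a / Sf b)) by lra.
  replace 5 with (sqrt (5 ^ 2)) by (apply sqrt_pow2; lra).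
  rewrite <- sqrt_mult by (try apply pow_le; try (apply Rlt_le, Rdiv_lt_0_compat; rewrite S_INR); lra).
  apply sqrt_le_1_alt. rewrite !S_INR.
  replace ((Sf a / Sf b) ^ 2) with (Sf a ^ 2 / Sf b ^ 2) by (field; lra).
  destruct (Nat.eq_dec b 0) as [->|Hb].
  - replace a with 0%nat by lia. rewrite Sf0. simpl. lra.
  - assert (HB : 1 <= INR b) by (apply (le_INR 1); lia).
    pose proof (Sf_sq b ltac:(lia)) as [Hb1 _].
    assert (Hb2 : 0 < Sf b ^ 2) by (apply pow_lt; lra).
    apply Rle_trans with (Sf a ^ 2 * (9 * INR b)).
    { unfold Rdiv. apply Rmult_le_compat_l. apply pow_le; lra.
      replace (9 * INR b) with (/ / (9 * INR b)) by (field; lra).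
      apply Rinv_le_contravar; [apply Rinv_0_lt_compat; lra| lra]. }
    destruct (Nat.eq_dec a 0) as [->|Ha].
    + rewrite Sf0. simpl. lra.
    + assert (HA1 : 1 <= INR a) by (apply (le_INR 1); lia).
      pose proof (Sf_sq a ltac:(lia)) as [_ Ha2].
      apply Rle_trans with (/ INR a * (9 * INR b)).
      { apply Rmult_le_compat_r; lra. }
      apply Rmult_le_reg_r with (INR a * (INR a + 1)). nra.
      field_simplify; try lra. nra.
Qed.


Lemma Qf_nonneg (A B t : R) : 0 <= A -> A <= B -> 0 <= Qf A B t.
Proof.
  intros HA HAB. unfold Qf. pose proof (Rabs_pos (t - A)).
  apply Rmult_le_pos. apply Rmult_le_pos; [lra| apply pow_le; lra].
  set (P := 2 * ((A + Rabs (t - A)) * (B + Rabs (t - A)))).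
  assert (0 <= P) by (unfold P; nra).
  destruct (Req_dec P 0) as [->|Hn]. rewrite Rinv_0; lra.
  apply Rlt_le, Rinv_0_lt_compat; lra.
Qed.

Lemma div_lb (N P U : R) : 0 <= N -> 0 < P -> P <= U -> N / U <= N / P.
Proof.
  intros HN HP HPU. unfold Rdiv. apply Rmult_le_compat_l; auto.
  apply Rinv_le_contravar; auto.
Qed.

Lemma Q_lb (h H x : R) : 1 <= h -> 2 * h <= H -> 40 <= H -> H <= 10 * x^2 ->
  H / h / 409600 <= (Qf (h - 1) (H - 1) (h - x)) ^ 2.
Proof.
  intros Hh HhH H40 Hx.
  unfold Qf. replace (h - x - (h - 1)) with (1 - x) by ring.
  replace (H - 1 - (h - 1)) with (H - h) by ring.
  set (y := Rabs (1 - x)).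
  assert (Hy0 : 0 <= y) by apply Rabs_pos.
  assert (Hy2 : y ^ 2 = (1 - x)^2) by (unfold y; rewrite <- !Rsqr_pow2; symmetry; apply Rsqr_abs).
  assert (Hyx : H / 40 <= y ^ 2) by (rewrite Hy2; nra).
  assert (HP : 0 < 2 * ((h - 1 + y) * (H - 1 + y))).
  { assert (0 < y). { destruct (Req_dec y 0) as [E|E]. rewrite E in Hyx. lra. lra. } nra. }
  set (q := (H - h) * y ^ 2 / (2 * ((h - 1 + y) * (H - 1 + y)))).
  assert (Hq0 : 0 <= q) by (apply Rmult_le_pos; [nra|apply Rlt_le, Rinv_0_lt_compat; lra]).
  assert (Hr1 : 1 <= H / h) by (apply Rmult_le_reg_r with h; [lra|]; field_simplify; lra).
  assert (HrH : H / h <= H) by (apply Rmult_le_reg_r with h; [lra|]; field_simplify; nra).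
  destruct (Rle_lt_dec y (h - 1)) as [Ya|Ya].
  -
    assert (q >= (H - h) * y ^ 2 / (8 * h * H)).
    { apply Rle_ge, div_lb; [nra|lra|nra]. }
    assert ((H - h) * y ^ 2 / (8 * h * H) >= H / h / 640).
    { apply Rle_ge. replace (H / h / 640) with ((H / 2) * (H / 40) / (8 * h * H)) by (field; lra).
      unfold Rdiv at 1 3. apply Rmult_le_compat_r. apply Rlt_le, Rinv_0_lt_compat; nra.
      apply Rmult_le_compat; lra. }
    assert (H / h / 409600 <= (H / h / 640) ^ 2) by nra.
    assert ((H / h / 640) ^ 2 <= q ^ 2) by (apply pow_incr; lra).
    lra.
  - destruct (Rle_lt_dec y (H - 1)) as [Yb|Yb].
    + assert (q >= (H - h) * y / (8 * H)).
      { apply Rle_ge. replace ((H - h) * y / (8 * H)) with ((H - h) * y ^ 2 / (8 * H * y))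
          by (field; nra).
        apply div_lb; [nra|lra|nra]. }
      assert (((H - h) * y / (8 * H)) ^ 2 >= H / 10240).
      { apply Rle_ge. replace (((H - h) * y / (8 * H)) ^ 2) with ((H - h) ^ 2 * y ^ 2 / (64 * H ^ 2))
          by (field; lra).
        replace (H / 10240) with ((H / 2) ^ 2 * (H / 40) / (64 * H ^ 2)) by (field; lra).
        unfold Rdiv at 1 2. apply Rmult_le_compat_r. apply Rlt_le, Rinv_0_lt_compat; nra.
        apply Rmult_le_compat; try lra. apply pow_le; lra. apply pow_incr; lra. }
      assert (((H - h) * y / (8 * H)) ^ 2 <= q ^ 2).
      { apply pow_incr. split; [|lra]. apply Rmult_le_pos; [nra|]. apply Rlt_le, Rinv_0_lt_compat; lra. }
      assert (H / h / 409600 <= H / 10240) by (unfold Rdiv at 1; nra).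
      lra.
    + assert (q >= (H - h) * y ^ 2 / (8 * y ^ 2)).
      { apply Rle_ge, div_lb; [nra|lra|nra]. }
      assert ((H - h) * y ^ 2 / (8 * y ^ 2) = (H - h) / 8) by (field; nra).
      assert ((H / h / 409600) <= ((H - h) / 8) ^ 2) by (unfold Rdiv at 1; nra).
      assert (((H - h) / 8) ^ 2 <= q ^ 2) by (apply pow_incr; lra).
      lra.
Qed.

Lemma part_iv (k n : nat) (x : R) : (1 <= k)%nat -> (k <= n)%nat ->
  fm k x <= 5 * sqrt (INR n / INR k) * fm n x.
Proof.
  intros Hk Hkn. pose proof (fm_nonneg k x). pose proof (fm_nonneg n x).
  assert (Hk' : 1 <= INR k) by (apply (le_INR 1); lia).
  destruct (Nat.eq_dec k n) as [<-|Hne].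
  - replace (INR k / INR k) with 1 by (field; lra). rewrite sqrt_1. lra.
  - destruct k as [|a]; [lia|].
    destruct (Rle_lt_dec x (INR (S a))) as [Hx|Hx].
    2: { rewrite fm_gt by auto. apply Rmult_le_pos; auto.
         apply Rmult_le_pos; [lra|apply sqrt_pos]. }
    replace n with (S (a + (n - S a))) by lia.
    eapply Rle_trans; [apply (ratio a (n - S a)); [lia|auto]|].
    apply Rmult_le_compat_r; [apply fm_nonneg|].
    set (Q := Qf (INR a) (INR (a + (n - S a))) (INR (S a) - x)).
    assert (0 <= Q) by (apply Qf_nonneg; [apply pos_INR|apply le_INR; lia]).
    assert (exp (- Q) <= 1) by (rewrite <- exp_0; apply exp_le; lra).
    pose proof (Sf_ratio a (a + (n - S a)) ltac:(lia)).
    assert (0 <= Sf a / Sf (a + (n - S a))) by (apply Rlt_le, Rdiv_lt_0_compat; apply Sf_pos).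
    assert (0 < exp (- Q)) by apply exp_pos.
    nra.
Qed.

Definition K3 : R := 409600 ^ 3 * 46656.

Lemma exp_pow6 (Q : R) : 0 <= Q -> (Q / 6) ^ 6 <= exp Q.
Proof.
  intros HQ. replace (exp Q) with (exp (Q / 6) ^ 6).
  2: { rewrite <- (exp_ln (exp (Q/6) ^ 6)) by (apply pow_lt, exp_pos).
       rewrite ln_pow by apply exp_pos. rewrite ln_exp. f_equal. simpl. field. }
  apply pow_incr. split. lra. pose proof (exp_ineq1_le (Q / 6)). lra.
Qed.

Lemma r3_bound (r Q : R) : 1 <= r -> 0 <= Q -> (r <= 40 \/ r / 409600 <= Q ^ 2) ->
  r ^ 3 * exp (- Q) <= K3.
Proof.
  intros Hr HQ Hc. rewrite exp_Ropp.
  assert (0 < exp Q) by apply exp_pos.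
  apply Rmult_le_reg_r with (exp Q); auto.
  rewrite Rmult_assoc, Rinv_l, Rmult_1_r by lra.
  unfold K3. destruct Hc as [Hc|Hc].
  - assert (1 <= exp Q) by (rewrite <- exp_0; apply exp_le; lra).
    assert (r ^ 3 <= 40 ^ 3) by (apply pow_incr; lra). nra.
  - pose proof (exp_pow6 Q HQ).
    assert ((r / 409600) ^ 3 <= (Q ^ 2) ^ 3) by (apply pow_incr; lra).
    replace ((Q / 6) ^ 6) with ((Q ^ 2) ^ 3 / 46656) in H0 by field.
    replace ((r / 409600) ^ 3) with (r ^ 3 / 409600 ^ 3) in H1 by field.
    nra.
Qed.

Lemma part_iii (x : R) (h H : nat) : (1 <= h)%nat -> (h <= H)%nat -> INR H <= 10 * x ^ 2 ->
  fm h x / INR h ^ 2 <= (5 * K3) * fm H x / INR H ^ 2.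
Proof.
  intros Hh HhH Hx. pose proof (fm_nonneg h x). pose proof (fm_nonneg H x).
  assert (Hh' : 1 <= INR h) by (apply (le_INR 1); lia).
  assert (HH' : INR h <= INR H) by (apply le_INR; lia).
  assert (HK : 1 <= K3) by (unfold K3; lra).
  destruct (Nat.eq_dec h H) as [<-|Hne].
  { unfold Rdiv. apply Rmult_le_compat_r. apply Rlt_le, Rinv_0_lt_compat, pow_lt; lra. nra. }
  assert (HHp : 0 < INR H ^ 2) by (apply pow_lt; lra).
  destruct h as [|a]; [lia|].
  destruct (Rle_lt_dec x (INR (S a))) as [Hxa|Hxa].
  2: { rewrite (fm_gt (S a)) by auto. unfold Rdiv. rewrite Rmult_0_l.
       apply Rmult_le_pos. nra. apply Rlt_le, Rinv_0_lt_compat; lra. }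
  set (d := (H - S a)%nat).
  assert (EH : H = S (a + d)) by (unfold d; lia).
  pose proof (ratio a d x ltac:(unfold d; lia) Hxa) as R0. rewrite <- EH in R0.
  set (Q := Qf _ _ _) in R0.
  assert (HQ : 0 <= Q) by (apply Qf_nonneg; [apply pos_INR|apply le_INR; lia]).
  set (r := INR H / INR (S a)).
  assert (Hr1 : 1 <= r) by (unfold r; apply Rmult_le_reg_r with (INR (S a)); [lra|]; field_simplify; lra).
  pose proof (Sf_ratio a (a + d) ltac:(lia)) as SR. rewrite <- EH in SR. fold r in SR.
  assert (Hsr : sqrt r <= r).
  { rewrite <- (sqrt_pow2 r) at 2 by lra. apply sqrt_le_1_alt. nra. }
  assert (Hr3 : r ^ 3 * exp (- Q) <= K3).
  { apply r3_bound; auto.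
    destruct (Rle_lt_dec 40 (INR H)) as [H40|H40].
    2: { left. unfold r. apply Rmult_le_reg_r with (INR (S a)); [lra|]. field_simplify; lra. }
    destruct (Rle_lt_dec (2 * INR (S a)) (INR H)) as [H2|H2].
    2: { left. unfold r. apply Rmult_le_reg_r with (INR (S a)); [lra|]. field_simplify; lra. }
    right. pose proof (Q_lb (INR (S a)) (INR H) x Hh' H2 H40 Hx) as QL.
    unfold Q. replace (INR a) with (INR (S a) - 1) by (rewrite S_INR; ring).
    replace (INR (a + d)) with (INR H - 1) by (rewrite EH, S_INR; ring).
    exact QL. }
  assert (0 < exp (- Q)) by apply exp_pos.
  assert (0 <= Sf a / Sf (a + d)) by (apply Rlt_le, Rdiv_lt_0_compat; apply Sf_pos).
  assert (fm (S a) x <= 5 * r * exp (- Q) * fm H x).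
  { eapply Rle_trans; [exact R0|]. apply Rmult_le_compat_r; auto.
    apply Rmult_le_compat_r; [lra|]. nra. }
  assert (5 * r * exp (- Q) <= 5 * K3 / r ^ 2).
  { apply Rmult_le_reg_r with (r ^ 2). apply pow_lt; lra.
    replace (5 * K3 / r ^ 2 * r ^ 2) with (5 * K3) by (field; lra).
    replace (5 * r * exp (- Q) * r ^ 2) with (5 * (r ^ 3 * exp (- Q))) by ring. lra. }
  assert (Hrr : INR (S a) ^ 2 * r ^ 2 = INR H ^ 2) by (unfold r; field; lra).
  apply Rmult_le_reg_r with (INR (S a) ^ 2). apply pow_lt; lra.
  unfold Rdiv. rewrite Rmult_assoc, Rinv_l, Rmult_1_r by (apply pow_nonzero; lra).
  rewrite <- Hrr.
  replace (5 * K3 * fm H x * / (INR (S a) ^ 2 * r ^ 2) * INR (S a) ^ 2) with (5 * K3 / r ^ 2 * fm H x)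
    by (field; repeat split; try apply pow_nonzero; lra).
  nra.
Qed.

Lemma ln1ms_bounds (s : R) : -1/3 <= s <= 1/3 -> - s - s^2 <= ln (1 - s) <= - s - s^2/3.
Proof.
  intros Hs. destruct (Rle_lt_dec 0 s) as [Hp|Hn].
  - pose proof (lnm_ub4 s ltac:(lra)). pose proof (lnm_lb5 s ltac:(lra)).
    split; nra.
  - replace (1 - s) with (1 + (- s)) by ring.
    pose proof (ln_ub3 (- s) ltac:(lra)). pose proof (ln_lb4 (- s) ltac:(lra)).
    split; nra.
Qed.

Lemma fm_gauss (a : nat) (x : R) : x < INR (S a) ->
  fm (S a) x = Sf (S a) * exp (INR a * ln (1 - x / INR (S a)) + x).
Proof.
  intros Hx. assert (Hn : 1 <= INR (S a)) by (apply (le_INR 1); lia).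
  rewrite fm_S by lra. rewrite exp_plus.
  rewrite <- pow_exp by (apply Rlt_Rminus; unfold Rdiv; apply Rmult_lt_reg_r with (INR (S a)); [lra|];
    rewrite Rmult_assoc, Rinv_l, Rmult_1_r, Rmult_1_l; lra).
  unfold Sf. rewrite fact_simpl, mult_INR.
  replace (INR (S a) - x) with (INR (S a) * (1 - x / INR (S a))) by (field; lra).
  rewrite Rpow_mult_distr. change (INR (S a) ^ S a) with (INR (S a) * INR (S a) ^ a).
  replace (exp (- (INR (S a) * (1 - x / INR (S a))))) with (exp (- INR (S a)) * exp x)
    by (rewrite <- exp_plus; f_equal; field; lra).
  field. split. apply INR_fact_neq_0. lra.
Qed.

Lemma part_ii (n : nat) (x : R) : (1 <= n)%nat -> Rabs x <= INR n / 3 ->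
  / 5 * / sqrt (INR n) * exp (- x ^ 2 / INR n) <= fm n x /\
  fm n x <= 1 * / sqrt (INR n) * exp (- x ^ 2 / (3 * INR n)).
Proof.
  intros Hn Hx. destruct n as [|a]; [lia|].
  assert (Hn' : 1 <= INR (S a)) by (apply (le_INR 1); lia).
  set (N := INR (S a)) in *.
  assert (HxN : x < N) by (apply Rabs_le_between in Hx; lra).
  rewrite fm_gauss by auto. fold N.
  set (s := x / N).
  assert (Hxs : x = N * s) by (unfold s; field; lra).
  assert (Hs : -1/3 <= s <= 1/3).
  { apply Rabs_le_between in Hx. rewrite Hxs in Hx. split; nra. }
  pose proof (ln1ms_bounds s Hs) as [Hl1 Hl2].
  set (l := ln (1 - s)) in *.
  assert (HaN : INR a = N - 1) by (unfold N; rewrite S_INR; ring).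
  rewrite HaN.
  assert (Hx2 : x ^ 2 / N = N * s ^ 2) by (rewrite Hxs; field; lra).
  assert (Hx3 : x ^ 2 / (3 * N) = N * s ^ 2 / 3) by (rewrite Hxs; field; lra).
  pose proof (Sf_eq (S a) ltac:(lia)) as SE. fold N in SE.
  pose proof (Lf_bounds (S a) ltac:(lia)) as LB. fold N in LB.
  assert (Hsq : 0 < sqrt N) by (apply sqrt_lt_R0; lra).
  assert (HiN : 0 < / (2 * N)) by (apply Rinv_0_lt_compat; lra).
  assert (E5 : / 5 <= exp (- (5/4))).
  { assert (exp (- (1/4)) >= 3/4) by (pose proof (exp_ineq1_le (- (1/4))); lra).
    assert (exp (1/4) * exp (- (1/4)) = 1) by (rewrite <- exp_plus; replace (1/4 + - (1/4)) with 0 by ring; apply exp_0).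
    assert (exp 1 <= 3) by apply exp_le_3.
    assert (exp (5/4) = exp 1 * exp (1/4)) by (rewrite <- exp_plus; f_equal; lra).
    assert (0 < exp (1/4)) by apply exp_pos. assert (0 < exp 1) by apply exp_pos.
    assert (exp (5/4) <= 5) by nra.
    rewrite exp_Ropp. apply Rinv_le_contravar; [apply exp_pos|lra]. }
  rewrite SE. unfold Rdiv at 2. assert (Hisq : 0 < / sqrt N) by (apply Rinv_0_lt_compat; lra).
  split.
  - assert (E1 : - (5/4) + - x ^ 2 / N <= - Lf (S a) + ((N - 1) * l + x)).
    { replace (- x ^ 2 / N) with (- (N * s ^ 2)) by (rewrite Hxs; field; lra). rewrite Hxs.
      assert ((N - 1) * l >= (N - 1) * (- s - s ^ 2)) by (apply Rle_ge, Rmult_le_compat_l; lra).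
      nra. }
    apply exp_le in E1. rewrite (exp_plus (- Lf (S a))) in E1; try rewrite (exp_plus (- (5/4))) in E1.
    assert (0 < exp (- x ^ 2 / N)) by apply exp_pos.
    assert (/ 5 * exp (- x ^ 2 / N) <= exp (- (5/4)) * exp (- x ^ 2 / N)) by (apply Rmult_le_compat_r; lra).
    assert (/ 5 * exp (- x ^ 2 / N) <= exp (- Lf (S a)) * exp ((N - 1) * l + x)) by lra.
    nra.
  - assert (E1 : - Lf (S a) + ((N - 1) * l + x) <= - x ^ 2 / (3 * N)).
    { replace (- x ^ 2 / (3 * N)) with (- (N * s ^ 2 / 3)) by (rewrite Hxs; field; lra). rewrite Hxs.
      assert ((N - 1) * l <= (N - 1) * (- s - s ^ 2 / 3)) by (apply Rmult_le_compat_l; lra).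
      nra. }
    apply exp_le in E1. rewrite (exp_plus (- Lf (S a))) in E1; try rewrite (exp_plus (- (5/4))) in E1. nra.
Qed.

Lemma qU_bound (u : R) : 0 <= u <= 1/9 ->
  -22/9 - 17/90*u + 127/81*u^2 + 109/27*u^3 + 1018/81*u^4 - 236/81*u^5 - 9592/243*u^6
  - 728/81*u^7 + 1388/27*u^8 + 200/9*u^9 - 80/3*u^10 - 16*u^11 <= -1.
Proof.
  intros Hu.
  assert (forall k, 0 <= u ^ k <= (1/9)^k) by (intros k; split; [apply pow_le; lra|apply pow_incr; lra]).
  pose proof (H 2%nat). pose proof (H 3%nat). pose proof (H 4%nat). pose proof (H 5%nat).
  pose proof (H 6%nat). pose proof (H 7%nat). pose proof (H 8%nat). pose proof (H 9%nat).
  pose proof (H 10%nat). pose proof (H 11%nat).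
  simpl ((1/9)^_) in *. lra.
Qed.

Lemma qL_bound (u : R) : 0 <= u <= 1/9 ->
  1 <= 14/9 + 4/9*u + 154/81*u^2 + 16/27*u^3 + 490/81*u^4 - 160/27*u^5 + 32/3*u^6 - 16/3*u^7 + 4*u^8.
Proof.
  intros Hu.
  assert (forall k, 0 <= u ^ k <= (1/9)^k) by (intros k; split; [apply pow_le; lra|apply pow_incr; lra]).
  pose proof (H 2%nat). pose proof (H 3%nat). pose proof (H 4%nat). pose proof (H 5%nat).
  pose proof (H 6%nat). pose proof (H 7%nat). pose proof (H 8%nat).
  simpl ((1/9)^_) in *. lra.
Qed.

Lemma U_id (u : R) : let v := u - 2/3*u^2 - 2*u^3 in
  -u^2/2 + u^3/3 - u^4/4 + u^5/5 + (v^2/2 + v^3/3 + v^4/4 + v^5/2) =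
  u^4 * (-22/9 - 17/90*u + 127/81*u^2 + 109/27*u^3 + 1018/81*u^4 - 236/81*u^5 - 9592/243*u^6
  - 728/81*u^7 + 1388/27*u^8 + 200/9*u^9 - 80/3*u^10 - 16*u^11).
Proof. intros v. unfold v. field. Qed.

Lemma L_id (u : R) : let v := u - 2/3*u^2 + 2*u^3 in
  -u^2/2 + u^3/3 - u^4/4 + (v^2/2 + v^3/3 + v^4/4) =
  u^4 * (14/9 + 4/9*u + 154/81*u^2 + 16/27*u^3 + 490/81*u^4 - 160/27*u^5 + 32/3*u^6 - 16/3*u^7 + 4*u^8).
Proof. intros v. unfold v. field. Qed.

Definition Phi (N z c : R) : R := N * ln (N + z) - N * ln (N - z + c) - 2 * z + c.

Lemma fm_exp (n : nat) (x : R) : (1 <= n)%nat -> x < INR n ->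
  fm n x = exp ((INR n - 1) * ln (INR n - x) - (INR n - x)) / INR (fact (n - 1)).
Proof.
  intros Hn Hx. destruct n as [|a]; [lia|].
  rewrite fm_S by lra. rewrite pow_exp by lra.
  replace (S a - 1)%nat with a by lia.
  replace (INR (S a) - 1) with (INR a) by (rewrite S_INR; ring).
  rewrite <- exp_plus. f_equal.
Qed.

Lemma spec_iff (n : nat) (z c : R) : (1 <= n)%nat -> 0 <= c <= z -> z < INR n - 1 ->
  (fm n (1 - z) = fm n (1 + z - c) <-> Phi (INR n - 1) z c = 0).
Proof.
  intros Hn Hc Hz.
  rewrite !fm_exp by (auto; lra).
  replace (INR n - (1 - z)) with (INR n - 1 + z) by ring.
  replace (INR n - (1 + z - c)) with (INR n - 1 - z + c) by ring.
  unfold Phi. pose proof (INR_fact_lt_0 (n - 1)). split.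
  - intros E. apply (f_equal (fun w => w * INR (fact (n - 1)))) in E.
    unfold Rdiv in E. rewrite !Rmult_assoc, !Rinv_l, !Rmult_1_r in E by lra.
    apply exp_inv in E. lra.
  - intros E. f_equal. f_equal. lra.
Qed.

Lemma Phi_decr (N z c1 c2 : R) : 0 < N - z -> 0 <= c1 < c2 -> c2 <= z ->
  Phi N z c2 < Phi N z c1.
Proof.
  intros HNz Hc Hc2.
  destruct (MVT_cor2 (Phi N z) (fun c => (c - z) / (N - z + c)) c1 c2) as [c [E Hcc]]; [lra| |].
  - intros c Hc'. apply is_derive_Reals. unfold Phi. auto_derive. lra. field. lra.
  - assert (0 < / (N - z + c)) by (apply Rinv_0_lt_compat; lra).
    assert ((c - z) / (N - z + c) < 0) by (unfold Rdiv; nra).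
    nra.
Qed.

Lemma Phi_scaled (N z c : R) : 0 < N -> 0 <= z -> z < N -> 0 <= c <= z ->
  Phi N z c = N * (ln (1 + z / N) - ln (1 - (z - c) / N) - z / N - (z - c) / N).
Proof.
  intros HN Hz HzN Hc. unfold Phi.
  replace (N + z) with (N * (1 + z / N)) by (field; lra).
  replace (N - z + c) with (N * (1 - (z - c) / N)) by (field; lra).
  assert (0 <= z / N) by (unfold Rdiv; apply Rmult_le_pos; [lra|apply Rlt_le, Rinv_0_lt_compat; lra]).
  assert (0 < 1 + z / N) by lra.
  assert (0 < 1 - (z - c) / N).
  { assert ((z - c) / N <= z / N) by (unfold Rdiv; apply Rmult_le_compat_r; [apply Rlt_le, Rinv_0_lt_compat|]; lra).
    assert (z / N < 1) by (apply Rmult_lt_reg_r with N; [lra|]; unfold Rdiv; rewrite Rmult_assoc, Rinv_l; lra).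
    lra. }
  rewrite !ln_mult by lra. field. lra.
Qed.

Lemma Phi_plus (N z : R) : 19 <= N -> 0 < z <= (N + 1) / 10 ->
  Phi N z (2 * z ^ 2 / (3 * N) + 2 * z ^ 3 / N ^ 2) < 0.
Proof.
  intros HN Hz. set (u := z / N).
  assert (Hzu : z = N * u) by (unfold u; field; lra).
  assert (Hu : 0 < u <= 2/19).
  { split. unfold u. apply Rdiv_lt_0_compat; lra.
    apply Rmult_le_reg_r with N; [lra|]. rewrite Rmult_comm, <- Hzu. nra. }
  set (v := u - 2/3*u^2 - 2*u^3).
  assert (Hv : 0 <= v <= 1/2) by (unfold v; split; nra).
  assert (Hcz : 2 * z ^ 2 / (3 * N) + 2 * z ^ 3 / N ^ 2 <= z).
  { rewrite Hzu. replace (2 * (N * u) ^ 2 / (3 * N) + 2 * (N * u) ^ 3 / N ^ 2) with (N * (2/3*u^2 + 2*u^3)) by (field; lra).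
    nra. }
  assert (Hc0 : 0 <= 2 * z ^ 2 / (3 * N) + 2 * z ^ 3 / N ^ 2).
  { rewrite Hzu. replace (2 * (N * u) ^ 2 / (3 * N) + 2 * (N * u) ^ 3 / N ^ 2) with (N * (2/3*u^2 + 2*u^3)) by (field; lra).
    nra. }
  rewrite Phi_scaled by (try lra; nra).
  replace ((z - (2 * z ^ 2 / (3 * N) + 2 * z ^ 3 / N ^ 2)) / N) with v by (unfold v; rewrite Hzu; field; lra).
  fold u.
  pose proof (ln_ub5 u ltac:(lra)). pose proof (lnm_lb5 v Hv).
  pose proof (U_id u) as UI. cbv zeta in UI. fold v in UI.
  pose proof (qU_bound u ltac:(lra)) as QB.
  assert (0 < u ^ 4) by (apply pow_lt; lra).
  match type of QB with ?q <= _ => assert (u ^ 4 * q <= u ^ 4 * (-1)) by (apply Rmult_le_compat_l; lra) end.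
  assert (ln (1 + u) - ln (1 - v) - u - v < 0) by lra.
  assert (0 < N) by lra.
  apply Rmult_lt_reg_l with (/ N). apply Rinv_0_lt_compat; lra.
  rewrite <- Rmult_assoc, Rinv_l, Rmult_1_l, Rmult_0_r by lra. lra.
Qed.

Lemma Phi_minus (N z : R) : 19 <= N -> 0 < z <= (N + 1) / 10 ->
  0 < Phi N z (2 * z ^ 2 / (3 * N) - 2 * z ^ 3 / N ^ 2).
Proof.
  intros HN Hz. set (u := z / N).
  assert (Hzu : z = N * u) by (unfold u; field; lra).
  assert (Hu : 0 < u <= 2/19).
  { split. unfold u. apply Rdiv_lt_0_compat; lra.
    apply Rmult_le_reg_r with N; [lra|]. rewrite Rmult_comm, <- Hzu. nra. }
  set (v := u - 2/3*u^2 + 2*u^3).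
  assert (Hv : 0 <= v < 1) by (unfold v; split; nra).
  assert (Hcz : 2 * z ^ 2 / (3 * N) - 2 * z ^ 3 / N ^ 2 <= z).
  { rewrite Hzu. replace (2 * (N * u) ^ 2 / (3 * N) - 2 * (N * u) ^ 3 / N ^ 2) with (N * (2/3*u^2 - 2*u^3)) by (field; lra).
    nra. }
  assert (Hc0 : 0 <= 2 * z ^ 2 / (3 * N) - 2 * z ^ 3 / N ^ 2).
  { rewrite Hzu. replace (2 * (N * u) ^ 2 / (3 * N) - 2 * (N * u) ^ 3 / N ^ 2) with (N * (2/3*u^2 - 2*u^3)) by (field; lra).
    nra. }
  rewrite Phi_scaled by (try lra; nra).
  replace ((z - (2 * z ^ 2 / (3 * N) - 2 * z ^ 3 / N ^ 2)) / N) with v by (unfold v; rewrite Hzu; field; lra).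
  fold u.
  pose proof (ln_lb4 u ltac:(lra)). pose proof (lnm_ub4 v Hv).
  pose proof (L_id u) as LI. cbv zeta in LI. fold v in LI.
  pose proof (qL_bound u ltac:(lra)) as QB.
  assert (0 < u ^ 4) by (apply pow_lt; lra).
  match type of QB with _ <= ?q => assert (u ^ 4 * 1 <= u ^ 4 * q) by (apply Rmult_le_compat_l; lra) end.
  assert (0 < ln (1 + u) - ln (1 - v) - u - v) by lra.
  apply Rmult_lt_0_compat; lra.
Qed.

Lemma part_i (n : nat) (z : R) : (20 <= n)%nat -> 0 <= z -> z <= INR n / 10 ->
  b n z <= z / 3 /\ Rabs (b n z - 2 * z ^ 2 / (3 * (INR n - 1))) <= 3 * z ^ 3 / INR n ^ 2.
Proof.
  intros Hn Hz0 Hz.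
  assert (Hn' : 20 <= INR n).
  { assert (INR 20 <= INR n) by (apply le_INR; lia).
    assert (INR 20 = 20) by (simpl; lra). lra. }
  set (N := INR n - 1).
  assert (HN : 19 <= N) by (unfold N; lra).
  assert (HzN : z <= (N + 1) / 10) by (unfold N; lra).
  destruct (Req_dec z 0) as [Hz00|Hzp].
  - subst z.
    assert (Hs : b_spec n 0 0) by (split; [lra|f_equal; ring]).
    pose proof (epsilon_spec (inhabits 0) (fun c => b_spec n 0 c) (ex_intro _ 0 Hs)) as Hb.
    fold (b n 0) in Hb. destruct Hb as [Hb _].
    replace (b n 0) with 0 by lra.
    replace (0 - 2 * 0 ^ 2 / (3 * N)) with 0 by (field; lra).
    rewrite Rabs_R0. split; [lra|].
    replace (3 * 0 ^ 3 / INR n ^ 2) with 0 by (field; lra). lra.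
  - assert (Hz1 : 0 < z <= (N + 1) / 10) by lra.
    set (bp := 2 * z ^ 2 / (3 * N) + 2 * z ^ 3 / N ^ 2).
    set (bm := 2 * z ^ 2 / (3 * N) - 2 * z ^ 3 / N ^ 2).
    set (u := z / N).
    assert (Hzu : z = N * u) by (unfold u; field; lra).
    assert (Hu : 0 < u <= 2/19).
    { split. unfold u. apply Rdiv_lt_0_compat; lra.
      apply Rmult_le_reg_r with N; [lra|]. rewrite Rmult_comm, <- Hzu. nra. }
    assert (Ebp : bp = N * (2/3*u^2 + 2*u^3)) by (unfold bp; rewrite Hzu; field; lra).
    assert (Ebm : bm = N * (2/3*u^2 - 2*u^3)) by (unfold bm; rewrite Hzu; field; lra).
    assert (Hbm0 : 0 <= bm) by (rewrite Ebm; nra).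
    assert (HNu3 : 0 < N * u ^ 3) by (apply Rmult_lt_0_compat; [lra|apply pow_lt; lra]).
    assert (Hbmp : bm < bp) by (assert (bp - bm = 4 * (N * u^3)) by (rewrite Ebm, Ebp; ring); lra).
    assert (Hbpz : bp <= z / 3).
    { assert (0 <= 1/3 - 2/3*u - 2*u^2) by nra.
      assert (0 <= (N * u) * (1/3 - 2/3*u - 2*u^2)) by (apply Rmult_le_pos; nra).
      assert (z / 3 - bp = (N * u) * (1/3 - 2/3*u - 2*u^2)) by (rewrite Ebp, Hzu; field).
      lra. }
    assert (HNz : 0 < N - z) by lra.
    pose proof (Phi_plus N z HN Hz1) as Pp. fold bp in Pp.
    pose proof (Phi_minus N z HN Hz1) as Pm. fold bm in Pm.
    destruct (Ranalysis5.IVT_interv (fun c => - Phi N z c) bm bp) as [c0 [Hc0 Ec0]].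
    + intros c Hc. apply derivable_continuous_pt.
      exists (- ((c - z) / (N - z + c))). apply is_derive_Reals.
      unfold Phi. auto_derive. lra. field. lra.
    + exact Hbmp.
    + lra.
    + lra.
    + assert (Hs : b_spec n z c0).
      { split; [lra|]. apply spec_iff; [lia|lra|fold N; lra|]. fold N. lra. }
      pose proof (epsilon_spec (inhabits 0) (fun c => b_spec n z c) (ex_intro _ c0 Hs)) as Hb.
      fold (b n z) in Hb. destruct Hb as [Hb1 Hb2].
      apply spec_iff in Hb2; [|lia|lra|fold N; lra]. fold N in Hb2.
      set (bb := b n z) in *.
      assert (Hup : bb <= bp).
      { destruct (Rle_lt_dec bb bp) as [H|H]; auto.
        pose proof (Phi_decr N z bp bb HNz ltac:(lra) ltac:(lra)). lra. }
      assert (Hlo : bm <= bb).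
      { destruct (Rle_lt_dec bm bb) as [H|H]; auto.
        pose proof (Phi_decr N z bb bm HNz ltac:(lra) ltac:(lra)). lra. }
      split; [lra|].
      fold N.
      assert (Hmid : 2 * z ^ 2 / (3 * N) = N * (2/3*u^2)) by (rewrite Hzu; field; lra).
      assert (Hd : Rabs (bb - 2 * z ^ 2 / (3 * N)) <= N * (2 * u^3)).
      { apply Rabs_le. rewrite Hmid. split; nra. }
      eapply Rle_trans; [exact Hd|].
      assert (HnN : INR n = N + 1) by (unfold N; ring).
      rewrite HnN, Hzu.
      apply Rmult_le_reg_r with ((N + 1) ^ 2). apply pow_lt; lra.
      replace (3 * (N * u) ^ 3 / (N + 1) ^ 2 * (N + 1) ^ 2) with (3 * N^3 * u^3) by (field; lra).
      assert (0 < u ^ 3) by (apply pow_lt; lra).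
      assert (2 * N * (N + 1) ^ 2 <= 3 * N ^ 3) by nra.
      nra.
Qed.

Theorem lemma6 :
  exists C : R, 0 < C /\
    (* (i) *)
    (forall (n : nat) (z : R), (20 <= n)%nat -> 0 <= z -> z <= INR n / 10 ->
        b n z <= z / 3 /\
        Rabs (b n z - 2 * z ^ 2 / (3 * (INR n - 1))) <= C * z ^ 3 / INR n ^ 2) /\
    (* (ii) *)
    (forall (n : nat) (x : R), (1 <= n)%nat -> Rabs x <= INR n / 3 ->
        / C * / sqrt (INR n) * exp (- x ^ 2 / INR n) <= fm n x /\
        fm n x <= C * / sqrt (INR n) * exp (- x ^ 2 / (3 * INR n))) /\
    (* (iii) *)
    (forall (x : R) (h H : nat), (1 <= h)%nat -> (h <= H)%nat -> INR H <= 10 * x ^ 2 ->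
        fm h x / INR h ^ 2 <= C * fm H x / INR H ^ 2) /\
    (* (iv) *)
    (forall (k n : nat) (x : R), (1 <= k)%nat -> (k <= n)%nat ->
        fm k x <= C * sqrt (INR n / INR k) * fm n x).
Proof.
  assert (HK : 1 <= K3) by (unfold K3; lra).
  exists (5 * K3). split; [lra|]. split; [|split; [|split]].
  - intros n z Hn Hz0 Hz. destruct (part_i n z Hn Hz0 Hz) as [H1 H2]. split; auto.
    eapply Rle_trans; [exact H2|].
    assert (0 < INR n) by (apply lt_0_INR; lia).
    assert (0 <= z ^ 3 / INR n ^ 2) by (apply Rmult_le_pos; [apply pow_le; lra|apply Rlt_le, Rinv_0_lt_compat, pow_lt; lra]).
    replace (3 * z ^ 3 / INR n ^ 2) with (3 * (z ^ 3 / INR n ^ 2)) by (unfold Rdiv; ring).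
    replace (5 * K3 * z ^ 3 / INR n ^ 2) with ((5 * K3) * (z ^ 3 / INR n ^ 2)) by (unfold Rdiv; ring).
    apply Rmult_le_compat_r; lra.
  - intros n x Hn Hx. destruct (part_ii n x Hn Hx) as [H1 H2].
    assert (Hn' : 1 <= INR n) by (apply (le_INR 1); lia).
    assert (0 < / sqrt (INR n)) by (apply Rinv_0_lt_compat, sqrt_lt_R0; lra).
    pose proof (exp_pos (- x ^ 2 / INR n)). pose proof (exp_pos (- x ^ 2 / (3 * INR n))).
    assert (/ (5 * K3) <= / 5) by (apply Rinv_le_contravar; lra).
    split.
    + eapply Rle_trans; [|exact H1]. rewrite !(Rmult_assoc (/ _)). apply Rmult_le_compat_r; [|lra].
      apply Rlt_le, Rmult_lt_0_compat; lra.
    + eapply Rle_trans; [exact H2|]. rewrite !(Rmult_assoc _ (/ sqrt (INR n))). apply Rmult_le_compat_r; [|lra].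
      apply Rlt_le, Rmult_lt_0_compat; lra.
  - intros x h H Hh HhH Hx. apply part_iii; auto.
  - intros k n x Hk Hkn. apply Rle_trans with (5 * sqrt (INR n / INR k) * fm n x).
    { apply part_iv; auto. }
    pose proof (fm_nonneg n x). pose proof (sqrt_pos (INR n / INR k)).
    assert (0 <= sqrt (INR n / INR k) * fm n x) by (apply Rmult_le_pos; auto).
    rewrite !(Rmult_assoc _ (sqrt (INR n / INR k))). apply Rmult_le_compat_r; [auto|lra].
Qed.
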